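(* Let $\tau\ge1$ and consider two candidates $P,Q$, where only the preferred candidate of each voter with preference strength at least $\tau$ is known. Weighted Majority Rule 3 (defined in the context) has distortion at most $\max\{\frac{\tau+2}{\tau},\tau\}$, and no deterministic mechanism using only this information can achieve a smaller worst-case distortion.
   Context: Voters $N=\{1,\dots,n\}$ and candidates are points of an arbitrary metric space $(X,d)$. Voter $i$ prefers $P$ to $Q$ only if $d(i,P)\le d(i,Q)$; $SC(Y)=\sum_{i\in N}d(i,Y)$; distortion of a winner is its social cost divided by the minimum social cost over the candidates, and a mechanism's distortion is the supremum over instances. Let $A=\{i: d(i,Q)/d(i,P)\ge\tau\}$, $B=\{j: d(j,P)/d(j,Q)\ge\tau\}$, and $C$ the remaining voters; the available information consists only of the sets $A$ and $B$ (nothing is known about voters in $C$). Weighted Majority Rule 3: voters in $A\cup B$ get weight $1$, voters in $C$ weight $0$; select $P$ if $|A|\ge|B|$ and $Q$ otherwise. *)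

(* Defs.v *)
From Stdlib Require Import Reals Lra List.
Open Scope R_scope.

Definition is_metric {X : Type} (d : X -> X -> R) : Prop :=
  (forall x y, 0 <= d x y) /\
  (forall x y, d x y = 0 <-> x = y) /\
  (forall x y, d x y = d y x) /\
  (forall x y z, d x z <= d x y + d y z).

(* Voters N = {1,...,n} are given by the list v of their positions (n = length v). *)
Definition SC {X : Type} (d : X -> X -> R) (v : list X) (Y : X) : R :=
  fold_right (fun i acc => d i Y + acc) 0 v.

(* i in A  iff  d(i,Q)/d(i,P) >= tau, written multiplicatively: tau*d(i,P) <= d(i,Q). *)
Definition strong_for {X : Type} (d : X -> X -> R) (tau : R) (P Q : X) (i : X) : bool :=
  if Rle_dec (tau * d i P) (d i Q) then true else false.

Definition setA {X : Type} (d : X -> X -> R) (tau : R) (P Q : X) (v : list X) : list bool :=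
  map (strong_for d tau P Q) v.
Definition setB {X : Type} (d : X -> X -> R) (tau : R) (P Q : X) (v : list X) : list bool :=
  map (strong_for d tau Q P) v.

(* A deterministic mechanism sees only the sets A and B (as characteristic
   vectors over the voters) and outputs true = select P, false = select Q. *)
Definition mechanism : Type := list bool -> list bool -> bool.

Definition card (l : list bool) : nat := length (filter (fun b => b) l).

(* Weighted Majority Rule 3: weight 1 on A \cup B, 0 on C; P iff |A| >= |B|. *)
Definition WMR3 : mechanism := fun a b => Nat.leb (card b) (card a).

Definition outcome {X : Type} (m : mechanism) (d : X -> X -> R) (tau : R)
  (P Q : X) (v : list X) : X :=
  if m (setA d tau P Q v) (setB d tau P Q v) then P else Q.

Definition opt_cost {X : Type} (d : X -> X -> R) (P Q : X) (v : list X) : R :=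
  Rmin (SC d v P) (SC d v Q).

(* Main.v *)
Require Import Defs.
From Stdlib Require Import Reals List Lra Psatz.
Open Scope R_scope.
Import ListNotations.

Lemma voter_bound {X : Type} (d : X -> X -> R) (tau D : R) (P Q i : X) :
  is_metric d -> 1 <= tau -> tau <= D -> tau + 2 <= D * tau ->
  d i P - D * d i Q <=
  d P Q * ((if strong_for d tau Q P i then 1 else 0) -
           (if strong_for d tau P Q i then 1 else 0)).
Proof.
  intros [Hnn [_ [Hsym Htri]]] Ht HD1 HD2.
  pose proof (Hnn i P). pose proof (Hnn i Q). pose proof (Hnn P Q).
  assert (T1 : d P Q <= d i P + d i Q) by (rewrite (Hsym i P); apply Htri).
  assert (T2 : d i P <= d i Q + d P Q) by (rewrite (Hsym P Q); apply Htri).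
  unfold strong_for.
  destruct (Rle_dec (tau * d i Q) (d i P)); destruct (Rle_dec (tau * d i P) (d i Q)).
  - nra.
  - nra.
  - assert (0 <= (D - 1) * (d i Q - tau * d i P)) by nra.
    assert (0 <= d i P * ((D - 1) * tau - 2)) by nra.
    nra.
  - nra.
Qed.

Lemma sum_bound {X : Type} (d : X -> X -> R) (tau D : R) (P Q : X) (v : list X) :
  is_metric d -> 1 <= tau -> tau <= D -> tau + 2 <= D * tau ->
  SC d v P - D * SC d v Q <=
  d P Q * (INR (card (setB d tau P Q v)) - INR (card (setA d tau P Q v))).
Proof.
  intros Hm Ht H1 H2.
  induction v as [|i v IH].
  - simpl. lra.
  - pose proof (voter_bound d tau D P Q i Hm Ht H1 H2) as Hv.
    unfold SC, setA, setB, card in *. cbn [map filter length fold_right].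
    destruct (strong_for d tau Q P i); destruct (strong_for d tau P Q i);
    cbn [filter length]; try rewrite !S_INR; nra.
Qed.

Lemma SC_nonneg {X : Type} (d : X -> X -> R) (v : list X) (Y : X) :
  is_metric d -> 0 <= SC d v Y.
Proof.
  intros [Hnn _]. induction v; simpl. lra. pose proof (Hnn a Y). lra.
Qed.

Definition dR (x y : R) : R := Rabs (x - y).

Lemma dR_metric : is_metric dR.
Proof.
  unfold dR; repeat split.
  - intros; apply Rabs_pos.
  - intros H. destruct (Req_dec (x - y) 0). lra.
    exfalso. apply (Rabs_no_R0 _ H0 H).
  - intros ->. replace (y - y) with 0 by ring. apply Rabs_R0.
  - intros. apply Rabs_minus_sym.
  - intros. replace (x - z) with ((x - y) + (y - z)) by ring. apply Rabs_triang.
Qed.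

Lemma rabs_val (a b : R) : 0 <= a -> a = b \/ a = - b -> Rabs b = a.
Proof. intros H [-> | ->]. apply Rabs_right. lra. apply Rabs_left1. lra. Qed.

Lemma exists_p (tau rho : R) : 1 <= tau -> rho * tau < tau + 2 ->
  exists p, 0 <= p /\ p * (tau + 1) < 1 /\ rho * (1 - p) < 1 + p.
Proof.
  intros Ht Hr.
  set (p0 := / (tau + 1)).
  assert (Hp0 : p0 * (tau + 1) = 1) by (unfold p0; field; lra).
  assert (Hp0p : 0 < p0) by (unfold p0; apply Rinv_0_lt_compat; lra).
  destruct (Rle_dec rho 1).
  - exists (p0 / 2). split; [lra|]. split; [lra|].
    assert (p0 < 1) by nra. nra.
  - set (q := (rho - 1) / (rho + 1)).
    assert (Hq : q * (rho + 1) = rho - 1) by (unfold q; field; lra).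
    assert (q0 : 0 < q) by (unfold q; apply Rdiv_lt_0_compat; lra).
    assert (Hqp : q * (tau + 1) < 1).
    { assert (q * (tau + 1) * (rho + 1) < 1 * (rho + 1)) by nra. nra. }
    assert (Hqp0 : q < p0) by nra.
    exists ((p0 + q) / 2). split; [lra|]. split; [nra|].
    nra.
Qed.

Theorem mainTheorem7 (tau : R) (htau : 1 <= tau) :
  (* upper bound: distortion of WMR3 is at most max{(tau+2)/tau, tau} *)
  (forall (X : Type) (d : X -> X -> R), is_metric d ->
     forall (P Q : X) (v : list X),
       SC d v (outcome WMR3 d tau P Q v)
         <= Rmax ((tau + 2) / tau) tau * opt_cost d P Q v) /\
  (* lower bound: every deterministic mechanism using only A and B has
     worst-case distortion at least max{(tau+2)/tau, tau} *)
  (forall (m : mechanism) (rho : R), rho < Rmax ((tau + 2) / tau) tau ->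
     exists (X : Type) (d : X -> X -> R) (P Q : X) (v : list X),
       is_metric d /\ 0 < opt_cost d P Q v /\
       rho * opt_cost d P Q v < SC d v (outcome m d tau P Q v)).
Proof.
  assert (Hdiv : (tau + 2) / tau * tau = tau + 2) by (field; lra).
  split.
  - intros X d Hm P Q v.
    set (D := Rmax ((tau + 2) / tau) tau).
    assert (HD1 : tau <= D) by apply Rmax_r.
    assert (HD2 : tau + 2 <= D * tau).
    { pose proof (Rmax_l ((tau + 2) / tau) tau). fold D in H. nra. }
    pose proof (sum_bound d tau D P Q v Hm htau HD1 HD2) as S1.
    pose proof (sum_bound d tau D Q P v Hm htau HD1 HD2) as S2.
    pose proof (SC_nonneg d v P Hm). pose proof (SC_nonneg d v Q Hm).
    destruct Hm as [Hnn _]. pose proof (Hnn P Q). pose proof (Hnn Q P).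
    unfold outcome, WMR3, opt_cost, Rmin.
    destruct (Nat.leb (card (setB d tau P Q v)) (card (setA d tau P Q v))) eqn:E.
    + apply Nat.leb_le, le_INR in E.
      assert (d P Q * (INR (card (setB d tau P Q v)) - INR (card (setA d tau P Q v))) <= 0) by nra.
      destruct (Rle_dec (SC d v P) (SC d v Q)); nra.
    + apply Nat.leb_gt, lt_INR in E.
      change (setB d tau Q P v) with (setA d tau P Q v) in S2.
      change (setA d tau Q P v) with (setB d tau P Q v) in S2.
      assert (d Q P * (INR (card (setA d tau P Q v)) - INR (card (setB d tau P Q v))) <= 0) by nra.
      destruct (Rle_dec (SC d v P) (SC d v Q)); nra.
  - intros m rho Hrho.
    unfold Rmax in Hrho.
    destruct (Rle_dec ((tau + 2) / tau) tau) as [Hle|Hlt].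
    + (* rho < tau, use a C voter *)
      destruct (Rlt_le_dec rho ((tau + 2) / tau)) as [Hr|Hr].
      2:{
      set (r := (rho + tau) / 2).
      assert (Hr1 : rho < r) by (unfold r; lra).
      assert (Hr2 : r < tau) by (unfold r; lra).
      assert (Hr3 : 1 < r) by nra.
      exists R, dR.
      destruct (m [false] [false]) eqn:Hm.
      * exists r, 1, [0]. split; [apply dR_metric|].
        unfold opt_cost, outcome, setA, setB, SC, strong_for, dR; simpl.
        rewrite (rabs_val r (0 - r)) by (lra || (left; lra) || (right; lra)). rewrite (rabs_val 1 (0 - 1)) by (lra || (left; lra) || (right; lra)).
        destruct (Rle_dec (tau * r) 1); [nra|].
        destruct (Rle_dec (tau * 1) r); [lra|]. simpl. rewrite Hm. try rewrite (rabs_val r (0 - r)) by (lra || (left; lra) || (right; lra)). try rewrite (rabs_val 1 (0 - 1)) by (lra || (left; lra) || (right; lra)).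
        unfold Rmin; destruct Rle_dec; split; ring_simplify; nra.
      * exists 1, r, [0]. split; [apply dR_metric|].
        unfold opt_cost, outcome, setA, setB, SC, strong_for, dR; simpl.
        rewrite (rabs_val r (0 - r)) by (lra || (left; lra) || (right; lra)). rewrite (rabs_val 1 (0 - 1)) by (lra || (left; lra) || (right; lra)).
        destruct (Rle_dec (tau * r) 1); [nra|].
        destruct (Rle_dec (tau * 1) r); [lra|]. simpl. rewrite Hm. try rewrite (rabs_val r (0 - r)) by (lra || (left; lra) || (right; lra)). try rewrite (rabs_val 1 (0 - 1)) by (lra || (left; lra) || (right; lra)).
        unfold Rmin; destruct Rle_dec; split; ring_simplify; nra. }
      assert (rho * tau < tau + 2) by nra.
      destruct (exists_p tau rho htau H) as [p [hp0 [hp1 hp2]]].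
      clear -htau hp0 hp1 hp2 Hdiv.
      exists R, dR.
      assert (A1 : tau * p <= 1 - p) by nra.
      assert (A2 : ~ (tau * (1 - p) <= p)) by nra.
      assert (p < 1) by nra.
      destruct (m [true; false] [false; true]) eqn:Hm.
      * exists 0, 1, [p; 1]. split; [apply dR_metric|].
        unfold opt_cost, outcome, setA, setB, SC, strong_for, dR; simpl.
        rewrite (rabs_val p (p - 0)) by (lra || (left; lra) || (right; lra)). rewrite (rabs_val (1 - p) (p - 1)) by (lra || (left; lra) || (right; lra)).
        rewrite (rabs_val 1 (1 - 0)) by (lra || (left; lra) || (right; lra)). rewrite (rabs_val 0 (1 - 1)) by (lra || (left; lra) || (right; lra)).
        destruct (Rle_dec (tau * p) (1 - p)); [|lra].
        destruct (Rle_dec (tau * 1) 0); [lra|].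
        destruct (Rle_dec (tau * (1 - p)) p); [lra|].
        destruct (Rle_dec (tau * 0) 1); [|lra]. rewrite Hm. try rewrite (rabs_val p (p - 0)) by (lra || (left; lra) || (right; lra)). try rewrite (rabs_val (1 - p) (p - 1)) by (lra || (left; lra) || (right; lra)). try rewrite (rabs_val 1 (1 - 0)) by (lra || (left; lra) || (right; lra)). try rewrite (rabs_val 0 (1 - 1)) by (lra || (left; lra) || (right; lra)).
        unfold Rmin; destruct Rle_dec; split; ring_simplify; nra.
      * exists 0, 1, [0; 1 - p]. split; [apply dR_metric|].
        unfold opt_cost, outcome, setA, setB, SC, strong_for, dR; simpl.
        rewrite (rabs_val 0 (0 - 0)) by (lra || (left; lra) || (right; lra)). rewrite (rabs_val 1 (0 - 1)) by (lra || (left; lra) || (right; lra)).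
        rewrite (rabs_val (1 - p) (1 - p - 0)) by (lra || (left; lra) || (right; lra)). rewrite (rabs_val p (1 - p - 1)) by (lra || (left; lra) || (right; lra)).
        destruct (Rle_dec (tau * 0) 1); [|lra].
        destruct (Rle_dec (tau * (1 - p)) p); [lra|].
        destruct (Rle_dec (tau * 1) 0); [lra|].
        destruct (Rle_dec (tau * p) (1 - p)); [|lra]. rewrite Hm. try rewrite (rabs_val 0 (0 - 0)) by (lra || (left; lra) || (right; lra)). try rewrite (rabs_val 1 (0 - 1)) by (lra || (left; lra) || (right; lra)). try rewrite (rabs_val (1 - p) (1 - p - 0)) by (lra || (left; lra) || (right; lra)). try rewrite (rabs_val p (1 - p - 1)) by (lra || (left; lra) || (right; lra)).
        unfold Rmin; destruct Rle_dec; split; ring_simplify; nra.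
    + assert (rho * tau < tau + 2) by nra.
      destruct (exists_p tau rho htau H) as [p [hp0 [hp1 hp2]]].
      clear -htau hp0 hp1 hp2 Hdiv.
      exists R, dR.
      assert (A1 : tau * p <= 1 - p) by nra.
      assert (A2 : ~ (tau * (1 - p) <= p)) by nra.
      assert (p < 1) by nra.
      destruct (m [true; false] [false; true]) eqn:Hm.
      * exists 0, 1, [p; 1]. split; [apply dR_metric|].
        unfold opt_cost, outcome, setA, setB, SC, strong_for, dR; simpl.
        rewrite (rabs_val p (p - 0)) by (lra || (left; lra) || (right; lra)). rewrite (rabs_val (1 - p) (p - 1)) by (lra || (left; lra) || (right; lra)).
        rewrite (rabs_val 1 (1 - 0)) by (lra || (left; lra) || (right; lra)). rewrite (rabs_val 0 (1 - 1)) by (lra || (left; lra) || (right; lra)).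
        destruct (Rle_dec (tau * p) (1 - p)); [|lra].
        destruct (Rle_dec (tau * 1) 0); [lra|].
        destruct (Rle_dec (tau * (1 - p)) p); [lra|].
        destruct (Rle_dec (tau * 0) 1); [|lra]. rewrite Hm. try rewrite (rabs_val p (p - 0)) by (lra || (left; lra) || (right; lra)). try rewrite (rabs_val (1 - p) (p - 1)) by (lra || (left; lra) || (right; lra)). try rewrite (rabs_val 1 (1 - 0)) by (lra || (left; lra) || (right; lra)). try rewrite (rabs_val 0 (1 - 1)) by (lra || (left; lra) || (right; lra)).
        unfold Rmin; destruct Rle_dec; split; ring_simplify; nra.
      * exists 0, 1, [0; 1 - p]. split; [apply dR_metric|].
        unfold opt_cost, outcome, setA, setB, SC, strong_for, dR; simpl.
        rewrite (rabs_val 0 (0 - 0)) by (lra || (left; lra) || (right; lra)). rewrite (rabs_val 1 (0 - 1)) by (lra || (left; lra) || (right; lra)).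
        rewrite (rabs_val (1 - p) (1 - p - 0)) by (lra || (left; lra) || (right; lra)). rewrite (rabs_val p (1 - p - 1)) by (lra || (left; lra) || (right; lra)).
        destruct (Rle_dec (tau * 0) 1); [|lra].
        destruct (Rle_dec (tau * (1 - p)) p); [lra|].
        destruct (Rle_dec (tau * 1) 0); [lra|].
        destruct (Rle_dec (tau * p) (1 - p)); [|lra]. rewrite Hm. try rewrite (rabs_val 0 (0 - 0)) by (lra || (left; lra) || (right; lra)). try rewrite (rabs_val 1 (0 - 1)) by (lra || (left; lra) || (right; lra)). try rewrite (rabs_val (1 - p) (1 - p - 0)) by (lra || (left; lra) || (right; lra)). try rewrite (rabs_val p (1 - p - 1)) by (lra || (left; lra) || (right; lra)).
        unfold Rmin; destruct Rle_dec; split; ring_simplify; nra.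
Qed.
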